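(* Let $G$ be a group and $f$ a circular homogeneous quasimorphism on $G$. (i) There exists a left-invariant total order $\preceq$ on $G$ such that the growth functions of the order induced by $\preceq$ via the left action of $G$ on itself are multiples of $f$. (ii) There exists a quasi-total triple $(G,\preceq_0,T)$ realizing $f$ such that $\preceq_0$ can be refined to a left-invariant total order $\preceq$ on $G$. (iii) If $f$ is unbounded on the center of $G$, then there exists a total triple $(G,\preceq,T)$ realizing $f$.
   Context: ${\rm Homeo}^+_{\mathbb{Z}}(\mathbb{R})$ denotes the group of orientation-preserving homeomorphisms of $\mathbb{R}$ commuting with $x\mapsto x+1$, and $T_{\mathbb{R}}(\phi)=\lim_{n\to\infty}\frac{\phi^n(0)}{n}$ is the translation number on it. A nonzero homogeneous quasimorphism $f$ on $G$ is circular if there is an injective homomorphism $\phi:G\to{\rm Homeo}^+_{\mathbb{Z}}(\mathbb{R})$ with $f=T_{\mathbb{R}}\circ\phi$. For a poset $(X,\preceq)$, an order-preserving bijection $T$ is dominant if for all $a,b$ some $n\in\mathbb{N}$ has $T^na\succ b$; $(X,\preceq,T)$ is a quasi-total triple if $T$ is dominant and for some $N\in\mathbb{N}$, for all $a,b$ there is $k\in\{0,\dots,N\}$ with $a\preceq T^kb$ or $b\preceq T^ka$; it is a total triple if moreover $\preceq$ is total. Given a group action on a poset $(X,\preceq)$, the induced order on $G$ is $g\leq h\Leftrightarrow\forall k\in G\,\forall x:(kg).x\preceq(kh).x$; for a bi-invariant order $\leq$ and a dominant $g$ ($g\geq e$, $g\ne e$, every $h$ has $g^n\geq h$ for some $n\geq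 0$), the growth function is $\gamma_g(h)=\lim_n\frac1n\inf\{p\in\mathbb{Z}:g^p\geq h^n\}$. A triple $(G,\preceq,T)$ realizes $f$ if the left multiplication action of $G$ on $G$ is by order-preserving maps commuting with $T$, effective and dominating (some $g,x,n\in\mathbb{N}$ with $gx\succeq T^nx$), and the growth functions of the induced order on $G$ are multiples of $f$. A refinement of a partial order $\preceq_0$ is a partial order $\preceq$ with $a\preceq_0 b\Rightarrow a\preceq b$. *)

(* Defs.v *)
From Stdlib Require Import Reals ZArith.
Open Scope R_scope.

Definition is_group {G : Type} (mul : G -> G -> G) (e : G) (inv : G -> G) : Prop :=
  (forall x y z, mul x (mul y z) = mul (mul x y) z) /\
  (forall x, mul e x = x) /\ (forall x, mul x e = x) /\
  (forall x, mul (inv x) x = e) /\ (forall x, mul x (inv x) = e).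

Definition npow {G : Type} (mul : G -> G -> G) (e : G) (g : G) (n : nat) : G :=
  Nat.iter n (mul g) e.

Definition zpow {G : Type} (mul : G -> G -> G) (e : G) (inv : G -> G) (g : G) (z : Z) : G :=
  match z with
  | Z0 => e
  | Zpos p => npow mul e g (Pos.to_nat p)
  | Zneg p => npow mul e (inv g) (Pos.to_nat p)
  end.

Definition central {G : Type} (mul : G -> G -> G) (z : G) : Prop :=
  forall g, mul z g = mul g z.

Definition homogeneous_quasimorphism {G : Type} (mul : G -> G -> G) (e : G)
  (inv : G -> G) (f : G -> R) : Prop :=
  (exists D : R, forall g h, Rabs (f (mul g h) - f g - f h) <= D) /\
  (forall g (z : Z), f (zpow mul e inv g z) = IZR z * f g).

Definition homeo_plus_Z (phi : R -> R) : Prop :=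
  (forall x, continuity_pt phi x) /\
  (exists psi : R -> R, (forall x, psi (phi x) = x) /\ (forall x, phi (psi x) = x) /\
                        (forall x, continuity_pt psi x)) /\
  (forall x y, x < y -> phi x < phi y) /\
  (forall x, phi (x + 1) = phi x + 1).

Definition translation_number (phi : R -> R) (t : R) : Prop :=
  Un_cv (fun n => Nat.iter n phi 0 / INR n) t.

Definition circular {G : Type} (mul : G -> G -> G) (e : G) (inv : G -> G)
  (f : G -> R) : Prop :=
  homogeneous_quasimorphism mul e inv f /\
  (exists g, f g <> 0) /\
  exists phi : G -> R -> R,
    (forall g, homeo_plus_Z (phi g)) /\
    (forall g h x, phi (mul g h) x = phi g (phi h x)) /\
    (forall g h, (forall x, phi g x = phi h x) -> g = h) /\
    (forall g, translation_number (phi g) (f g)).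

Definition partial_order {X : Type} (le : X -> X -> Prop) : Prop :=
  (forall a, le a a) /\ (forall a b, le a b -> le b a -> a = b) /\
  (forall a b c, le a b -> le b c -> le a c).

Definition total {X : Type} (le : X -> X -> Prop) : Prop :=
  forall a b, le a b \/ le b a.

Definition order_preserving_bij {X : Type} (le : X -> X -> Prop) (T : X -> X) : Prop :=
  (forall a b, le a b -> le (T a) (T b)) /\
  (exists Ti : X -> X, (forall x, Ti (T x) = x) /\ (forall x, T (Ti x) = x)).

(** N = {1,2,...}; "T^n a ≻ b" means b ⪯ T^n a and b <> T^n a *)
Definition dominant {X : Type} (le : X -> X -> Prop) (T : X -> X) : Prop :=
  order_preserving_bij le T /\
  forall a b, exists n : nat, (1 <= n)%nat /\ le b (Nat.iter n T a) /\ b <> Nat.iter n T a.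

Definition quasi_total_triple {X : Type} (le : X -> X -> Prop) (T : X -> X) : Prop :=
  partial_order le /\ dominant le T /\
  exists N : nat, (1 <= N)%nat /\
    forall a b, exists k : nat, (k <= N)%nat /\
      (le a (Nat.iter k T b) \/ le b (Nat.iter k T a)).

Definition total_triple {X : Type} (le : X -> X -> Prop) (T : X -> X) : Prop :=
  quasi_total_triple le T /\ total le.

Definition left_invariant {G : Type} (mul : G -> G -> G) (le : G -> G -> Prop) : Prop :=
  forall k x y, le x y -> le (mul k x) (mul k y).

Definition refines {X : Type} (le0 le : X -> X -> Prop) : Prop :=
  forall a b, le0 a b -> le a b.

(** Order on G induced by the left multiplication action of G on (G, le):
    g <= h  iff  forall k x, (k g).x ⪯ (k h).x *)
Definition induced_le {G : Type} (mul : G -> G -> G) (le : G -> G -> Prop)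
  (g h : G) : Prop :=
  forall k x, le (mul (mul k g) x) (mul (mul k h) x).

(** [rel a b] reads "a <= b"; g dominant: g >= e, g <> e, forall h exists n >= 0, g^n >= h *)
Definition dominant_elt {G : Type} (mul : G -> G -> G) (e : G)
  (rel : G -> G -> Prop) (g : G) : Prop :=
  rel e g /\ g <> e /\ forall h, exists n : nat, rel h (npow mul e g n).

(** [growth_fn ... g h l] : gamma_g(h) = lim_n (1/n) inf{p in Z | g^p >= h^n} = l
    (the infimum being attained, as a minimum of integers) *)
Definition growth_fn {G : Type} (mul : G -> G -> G) (e : G) (inv : G -> G)
  (rel : G -> G -> Prop) (g h : G) (l : R) : Prop :=
  exists p : nat -> Z,
    (forall n, rel (npow mul e h n) (zpow mul e inv g (p n)) /\
               forall q : Z, rel (npow mul e h n) (zpow mul e inv g q) -> (p n <= q)%Z) /\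
    Un_cv (fun n => IZR (p n) / INR n) l.

Definition growth_multiples_of {G : Type} (mul : G -> G -> G) (e : G) (inv : G -> G)
  (rel : G -> G -> Prop) (f : G -> R) : Prop :=
  forall g, dominant_elt mul e rel g ->
    exists c : R, forall h, growth_fn mul e inv rel g h (c * f h).

Definition realizes {G : Type} (mul : G -> G -> G) (e : G) (inv : G -> G)
  (le : G -> G -> Prop) (T : G -> G) (f : G -> R) : Prop :=
  (forall g x y, le x y -> le (mul g x) (mul g y)) /\
  (forall g x, T (mul g x) = mul g (T x)) /\
  (forall g, (forall x, mul g x = x) -> g = e) /\
  (exists g x (n : nat), (1 <= n)%nat /\ le (Nat.iter n T x) (mul g x)) /\
  growth_multiples_of mul e inv (induced_le mul le) f.

(* Main.v *)
Require Import Defs.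
From Stdlib Require Import Reals ZArith Lra Lia Classical ClassicalEpsilon Cantor.
Open Scope R_scope.

Lemma shift_nat (F : R -> R) (H1 : forall x, F (x + 1) = F x + 1) :
  forall (n : nat) x, F (x + INR n) = F x + INR n.
Proof.
  induction n as [|n IH]; intro x; simpl.
  - now rewrite !Rplus_0_r.
  - destruct n.
    + simpl. now rewrite H1.
    + replace (x + (INR (S n) + 1)) with ((x + INR (S n)) + 1) by ring.
      rewrite H1, IH. ring.
Qed.

Lemma shift_int (F : R -> R) (H1 : forall x, F (x + 1) = F x + 1) :
  forall (m : Z) x, F (x + IZR m) = F x + IZR m.
Proof.
  intros m x. destruct m as [|p|p].
  - simpl. now rewrite !Rplus_0_r.
  - rewrite <- positive_nat_Z, <- INR_IZR_INZ. apply shift_nat; auto.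
  - replace (IZR (Z.neg p)) with (- INR (Pos.to_nat p)).
    2:{ rewrite <- Pos2Z.opp_pos, opp_IZR, <- positive_nat_Z, <- INR_IZR_INZ. reflexivity. }
    pose proof (shift_nat F H1 (Pos.to_nat p) (x + - INR (Pos.to_nat p))) as H.
    replace (x + - INR (Pos.to_nat p) + INR (Pos.to_nat p)) with x in H by ring.
    lra.
Qed.

Lemma disp_cmp (F : R -> R) (Hinc : forall x y, x < y -> F x < F y)
  (H1 : forall x, F (x + 1) = F x + 1) :
  forall x y, F x - x < F y - y + 1.
Proof.
  intros x y.
  destruct (archimed (x - y)) as [Hu1 Hu2].
  set (m := (up (x - y) - 1)%Z).
  assert (Hm : IZR m = IZR (up (x - y)) - 1) by (unfold m; rewrite minus_IZR; reflexivity).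
  assert (Hle : y + IZR m <= x) by lra.
  assert (Hlt : x < y + IZR m + 1) by lra.
  pose proof (Hinc _ _ Hlt) as H. rewrite H1, shift_int in H by auto.
  lra.
Qed.

Lemma iter_bounds (F : R -> R) (Hinc : forall x y, x < y -> F x < F y)
  (H1 : forall x, F (x + 1) = F x + 1) x :
  forall k, INR k * (F x - x - 1) <= Nat.iter k F 0 <= INR k * (F x - x + 1).
Proof.
  induction k as [|k IH].
  - simpl. lra.
  - rewrite S_INR. simpl Nat.iter.
    pose proof (disp_cmp F Hinc H1 x (Nat.iter k F 0)).
    pose proof (disp_cmp F Hinc H1 (Nat.iter k F 0) x).
    lra.
Qed.

Lemma lim_bounds (u : nat -> R) l a b :
  Un_cv u l -> (forall n, (1 <= n)%nat -> a <= u n <= b) -> a <= l <= b.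
Proof.
  intros Hc Hb. split.
  - destruct (Rle_or_lt a l) as [|Hlt]; auto.
    destruct (Hc (a - l)) as [N HN]; [lra|].
    specialize (HN (S N) ltac:(lia)). specialize (Hb (S N) ltac:(lia)).
    unfold R_dist in HN. apply Rabs_def2 in HN. lra.
  - destruct (Rle_or_lt l b) as [|Hlt]; auto.
    destruct (Hc (l - b)) as [N HN]; [lra|].
    specialize (HN (S N) ltac:(lia)). specialize (Hb (S N) ltac:(lia)).
    unfold R_dist in HN. apply Rabs_def2 in HN. lra.
Qed.

Lemma tn_bound (F : R -> R) t (Hinc : forall x y, x < y -> F x < F y)
  (H1 : forall x, F (x + 1) = F x + 1)
  (Ht : Un_cv (fun n => Nat.iter n F 0 / INR n) t) :
  forall x, t - 1 <= F x - x <= t + 1.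
Proof.
  intro x.
  assert (B : F x - x - 1 <= t <= F x - x + 1).
  { apply (lim_bounds _ _ _ _ Ht). intros n Hn.
    pose proof (iter_bounds F Hinc H1 x n).
    assert (0 < INR n) by (apply lt_0_INR; lia).
    split.
    - apply Rmult_le_reg_r with (INR n); auto. unfold Rdiv. rewrite Rmult_assoc, Rinv_l by lra. lra.
    - apply Rmult_le_reg_r with (INR n); auto. unfold Rdiv. rewrite Rmult_assoc, Rinv_l by lra. lra. }
  lra.
Qed.

Definition Setup {G : Type} (mul : G -> G -> G) (e : G) (inv : G -> G) (f : G -> R)
  (phi : G -> R -> R) : Prop :=
  is_group mul e inv /\ (forall g z, f (zpow mul e inv g z) = IZR z * f g) /\
  (forall g, homeo_plus_Z (phi g)) /\ (forall g h x, phi (mul g h) x = phi g (phi h x)) /\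
  (forall g h, (forall x, phi g x = phi h x) -> g = h) /\
  (forall g, translation_number (phi g) (f g)).

Lemma disp {G} mul e inv f phi (S : @Setup G mul e inv f phi) :
  forall u x, f u - 1 <= phi u x - x <= f u + 1.
Proof.
  destruct S as (_ & _ & Hh & _ & _ & Ht).
  intros u. destruct (Hh u) as (_ & _ & Hinc & H1).
  apply tn_bound; auto. apply Ht.
Qed.

Lemma phi_inc {G} mul e inv f phi (S : @Setup G mul e inv f phi) :
  forall u x y, x < y -> phi u x < phi u y.
Proof. destruct S as (_ & _ & Hh & _). intro u. apply (Hh u). Qed.

Lemma phi_le {G} mul e inv f phi (S : @Setup G mul e inv f phi) :
  forall u x y, x <= y -> phi u x <= phi u y.
Proof.
  intros u x y [H|H]. left; eapply phi_inc; eauto. subst; lra.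
Qed.

Lemma npow_zpow {G} (mul : G -> G -> G) e inv g n :
  npow mul e g n = zpow mul e inv g (Z.of_nat n).
Proof.
  destruct n; simpl; auto. now rewrite SuccNat2Pos.id_succ.
Qed.

Lemma f_npow {G} mul e inv f phi (S : @Setup G mul e inv f phi) g n :
  f (npow mul e g n) = INR n * f g.
Proof.
  destruct S as (_ & Hq & _).
  rewrite (npow_zpow mul e inv), Hq, <- INR_IZR_INZ. reflexivity.
Qed.

Lemma f_inv {G} mul e inv f phi (S : @Setup G mul e inv f phi) g :
  f (inv g) = - f g.
Proof.
  destruct S as (HG & Hq & _).
  pose proof (Hq g (-1)%Z) as H. simpl in H. unfold npow in H. simpl in H.
  destruct HG as (_ & _ & Hr & _). rewrite Hr in H. rewrite H. lra.
Qed.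

Lemma Z_min (P : Z -> Prop) (L p0 : Z) :
  (forall p, P p -> (L <= p)%Z) -> P p0 ->
  exists p, P p /\ forall q, P q -> (p <= q)%Z.
Proof.
  intros HL H0.
  apply NNPP. intro Hn.
  assert (A : forall k : nat, forall j, (j <= k)%nat -> ~ P (L + Z.of_nat j)%Z).
  { induction k as [|k IH]; intros j Hj HP.
    - assert (j = 0%nat) by lia. subst. apply Hn. exists (L + 0)%Z. split; auto.
      intros q Hq. specialize (HL q Hq). lia.
    - destruct (Nat.eq_dec j (S k)).
      + subst. apply Hn. exists (L + Z.of_nat (S k))%Z. split; auto.
        intros q Hq. destruct (Z_le_gt_dec (L + Z.of_nat (S k)) q); auto.
        exfalso. specialize (HL q Hq).
        apply (IH (Z.to_nat (q - L))). lia. now rewrite Z2Nat.id, Zplus_minus by lia.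
      + apply (IH j); auto. lia. }
  pose proof (HL _ H0).
  apply (A (Z.to_nat (p0 - L)) (Z.to_nat (p0 - L))); auto.
  now rewrite Z2Nat.id, Zplus_minus by lia.
Qed.

Lemma nat_big (A : R) : exists n : nat, A < INR n.
Proof.
  destruct (INR_archimed 1 A) as [n Hn]; [lra|]. exists n. lra.
Qed.

Lemma growth_generic {G} mul e inv f phi (S : @Setup G mul e inv f phi)
  (le : G -> G -> Prop) (Hpo : partial_order le)
  (P1 : forall u v, (forall y, phi u y < phi v y) -> le u v)
  (Hnz : exists w, f w <> 0) :
  growth_multiples_of mul e inv (induced_le mul le) f.
Proof.
  pose proof (disp _ _ _ _ _ S) as D.
  pose proof (phi_inc _ _ _ _ _ S) as Inc.
  pose proof (f_npow _ _ _ _ _ S) as Fn.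
  pose proof (f_inv _ _ _ _ _ S) as Fi.
  destruct S as (HG & Hq & _ & Hhom & _ & _).
  destruct HG as (Has & Hl & Hr & _).
  destruct Hpo as (_ & Hanti & _).
  assert (FA : forall u v, f v > f u + 2 -> induced_le mul le u v).
  { intros u v Huv k x. apply P1. intro y. rewrite !Hhom. apply Inc.
    pose proof (D u (phi x y)). pose proof (D v (phi x y)). lra. }
  assert (FB : forall u v, induced_le mul le u v -> f v >= f u - 2).
  { intros u v Huv. destruct (Rge_or_gt (f v) (f u - 2)) as [|Hlt]; auto. exfalso.
    assert (Hvu : le v u).
    { apply P1. intro y. pose proof (D u y). pose proof (D v y). lra. }
    specialize (Huv e e). rewrite !Hl, !Hr in Huv.
    pose proof (Hanti _ _ Huv Hvu). subst. lra. }
  intros g (Hge & Hne & Hdom).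
  assert (Hfg : f g > 0).
  { destruct (Rgt_or_ge (f g) 0) as [|Hle]; auto. exfalso.
    assert (Hh0 : exists h0, f h0 > 0).
    { destruct Hnz as [w Hw]. destruct (Rgt_or_ge (f w) 0). eauto.
      exists (inv w). rewrite Fi. lra. }
    destruct Hh0 as [h0 Hh0].
    destruct (nat_big (2 / f h0)) as [m Hm].
    assert (Hm' : INR m * f h0 > 2).
    { apply (Rmult_lt_compat_r (f h0)) in Hm; auto. unfold Rdiv in Hm.
      rewrite Rmult_assoc, Rinv_l in Hm by lra. lra. }
    destruct (Hdom (npow mul e h0 m)) as [n Hn].
    apply FB in Hn. rewrite !Fn in Hn. pose proof (pos_INR n). nra. }
  exists (/ f g). intro h.
  assert (Ex : forall n : nat, exists p : Z,
     induced_le mul le (npow mul e h n) (zpow mul e inv g p) /\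
     (forall q, induced_le mul le (npow mul e h n) (zpow mul e inv g q) -> (p <= q)%Z)).
  { intro n.
    apply (Z_min _ (up ((INR n * f h - 2) / f g) - 1) (up ((INR n * f h + 3) / f g))).
    - intros p Hp. apply FB in Hp. rewrite Fn, Hq in Hp.
      destruct (archimed ((INR n * f h - 2) / f g)) as [A1 A2].
      assert (IZR p >= (INR n * f h - 2) / f g).
      { apply Rle_ge, Rmult_le_reg_r with (f g); [lra|]. unfold Rdiv.
        rewrite Rmult_assoc, Rinv_l by lra. lra. }
      apply le_IZR. rewrite minus_IZR. simpl. lra.
    - apply FA. rewrite Fn, Hq.
      destruct (archimed ((INR n * f h + 3) / f g)) as [A1 A2].
      apply (Rmult_lt_compat_r (f g)) in A1; [|lra]. unfold Rdiv in A1.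
      rewrite Rmult_assoc, Rinv_l in A1 by lra. lra. }
  set (p := fun n => proj1_sig (constructive_indefinite_description _ (Ex n))).
  assert (Hp : forall n, induced_le mul le (npow mul e h n) (zpow mul e inv g (p n)) /\
     (forall q, induced_le mul le (npow mul e h n) (zpow mul e inv g q) -> (p n <= q)%Z)).
  { intro n. unfold p. destruct (constructive_indefinite_description _ (Ex n)); auto. }
  exists p. split; auto.
  assert (Bd : forall n, INR n * f h - 2 <= IZR (p n) * f g <= INR n * f h + 2 + f g).
  { intro n. destruct (Hp n) as [H1 H2]. split.
    - apply FB in H1. rewrite Fn, Hq in H1. lra.
    - destruct (Rle_or_lt (IZR (p n) * f g) (INR n * f h + 2 + f g)) as [|Hc]; auto.
      exfalso. assert (Hi : induced_le mul le (npow mul e h n) (zpow mul e inv g (p n - 1))).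
      { apply FA. rewrite Fn, Hq, minus_IZR. simpl. lra. }
      apply H2 in Hi. lia. }
  intros eps Heps.
  destruct (nat_big ((2 + f g) / (f g * eps))) as [N HN].
  exists (S N). intros n Hn. unfold R_dist.
  assert (Hn0 : 0 < INR n) by (apply lt_0_INR; lia).
  assert (HnN : INR N < INR n) by (apply lt_INR; lia).
  assert (Key : Rabs (IZR (p n) / INR n - / f g * f h) <= (2 + f g) / (INR n * f g)).
  { specialize (Bd n).
    replace (IZR (p n) / INR n - / f g * f h) with
      ((IZR (p n) * f g - INR n * f h) / (INR n * f g)) by (field; lra).
    unfold Rdiv. rewrite Rabs_mult, Rabs_inv, (Rabs_pos_eq (INR n * f g)) by nra.
    apply Rmult_le_compat_r. left; apply Rinv_0_lt_compat; nra.
    apply Rabs_le. lra. }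
  eapply Rle_lt_trans; [exact Key|].
  apply (Rmult_lt_compat_r (f g * eps)) in HN; [|nra].
  unfold Rdiv in HN. rewrite Rmult_assoc, Rinv_l in HN by nra.
  unfold Rdiv. apply Rmult_lt_reg_r with (INR n * f g); [nra|].
  rewrite Rmult_assoc, Rinv_l by nra.
  assert (0 < (eps * f g) * (INR n - INR N)) by (apply Rmult_lt_0_compat; nra).
  nra.
Qed.

Definition qpt (k : nat) : R :=
  let (a, r) := Cantor.of_nat k in let (b, c) := Cantor.of_nat r in
  (INR a - INR b) / INR (S c).

Lemma qpt_dense : forall y d, 0 < d -> exists k, y < qpt k < y + d.
Proof.
  intros y d Hd.
  destruct (nat_big (/ d)) as [c Hc].
  set (C := INR (S c)).
  assert (HC : 0 < C) by (apply lt_0_INR; lia).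
  assert (HCd : 1 < C * d).
  { unfold C. rewrite S_INR. apply (Rmult_lt_compat_r d) in Hc; auto.
    rewrite Rinv_l in Hc by lra. pose proof (pos_INR c). nra. }
  destruct (archimed (y * C)) as [A1 A2].
  set (m := up (y * C)) in *.
  set (a := Z.to_nat m). set (b := Z.to_nat (- m)).
  assert (Hab : INR a - INR b = IZR m).
  { unfold a, b. rewrite !INR_IZR_INZ.
    destruct (Z_le_gt_dec 0 m).
    - rewrite Z2Nat.id by lia. replace (Z.to_nat (-m)) with 0%nat by lia. simpl. lra.
    - replace (Z.to_nat m) with 0%nat by lia. rewrite Z2Nat.id by lia. rewrite opp_IZR. simpl. lra. }
  exists (Cantor.to_nat (a, Cantor.to_nat (b, c))).
  unfold qpt. rewrite !Cantor.cancel_of_to. fold C. rewrite Hab.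
  split.
  - apply Rmult_lt_reg_r with C; auto. unfold Rdiv. rewrite Rmult_assoc, Rinv_l by lra. lra.
  - apply Rmult_lt_reg_r with C; auto. unfold Rdiv. rewrite Rmult_assoc, Rinv_l by lra. lra.
Qed.

Lemma nat_min (P : nat -> Prop) : (exists k, P k) -> exists k, P k /\ forall j, (j < k)%nat -> ~ P j.
Proof.
  intros [k0 H0]. apply NNPP. intro Hn.
  assert (A : forall k j, (j <= k)%nat -> ~ P j).
  { induction k as [|k IH]; intros j Hj HP.
    - apply Hn. exists j. split; auto. intros; lia.
    - destruct (Nat.eq_dec j (S k)).
      + subst. apply Hn. exists (S k). split; auto. intros i Hi. apply IH. lia.
      + apply (IH j); auto. lia. }
  apply (A k0 k0); auto.
Qed.

Lemma cont_sep (F H : R -> R) y :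
  continuity_pt F y -> continuity_pt H y -> F y <> H y ->
  exists k, F (qpt k) <> H (qpt k).
Proof.
  intros CF CH Hne.
  set (d := Rabs (F y - H y)).
  assert (Hd : 0 < d) by (apply Rabs_pos_lt; lra).
  destruct (CF (d / 2)) as [a1 [Ha1 HF]]; [lra|].
  destruct (CH (d / 2)) as [a2 [Ha2 HH]]; [lra|].
  destruct (qpt_dense y (Rmin a1 a2)) as [k Hk]. { apply Rmin_pos; lra. }
  exists k. intro Heq.
  pose proof (Rmin_l a1 a2). pose proof (Rmin_r a1 a2).
  assert (Dk : D_x no_cond y (qpt k)) by (split; [constructor| intro; lra]).
  assert (Dist : R_dist (qpt k) y < Rmin a1 a2).
  { unfold R_dist. rewrite Rabs_right by lra. lra. }
  assert (D1 : dist R_met (qpt k) y < a1) by (simpl; lra).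
  assert (D2 : dist R_met (qpt k) y < a2) by (simpl; lra).
  specialize (HF (qpt k) (conj Dk D1)).
  specialize (HH (qpt k) (conj Dk D2)).
  simpl in HF, HH. unfold R_dist in HF, HH. rewrite Heq in HF.
  unfold d in *.
  pose proof (Rabs_triang (H (qpt k) - F y) (- (H (qpt k) - H y))).
  rewrite Rabs_Ropp in H2.
  replace (H (qpt k) - F y + - (H (qpt k) - H y)) with (- (F y - H y)) in H2 by ring.
  rewrite Rabs_Ropp in H2. lra.
Qed.

Definition lexle {G} (phi : G -> R -> R) (u v : G) : Prop :=
  u = v \/ exists k, (forall j, (j < k)%nat -> phi u (qpt j) = phi v (qpt j)) /\
                     phi u (qpt k) < phi v (qpt k).

Definition ptle {G} (phi : G -> R -> R) (u v : G) : Prop :=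
  u = v \/ forall y, phi u y < phi v y.

Lemma lex_po {G} (phi : G -> R -> R) : partial_order (lexle phi).
Proof.
  split; [|split].
  - intro; left; auto.
  - intros a b [H|[k [Hk Hl]]] [H'|[k' [Hk' Hl']]]; auto.
    exfalso. destruct (lt_eq_lt_dec k k') as [[Hc|Hc]|Hc].
    + rewrite (Hk' k Hc) in Hl. lra.
    + subst. lra.
    + rewrite (Hk k' Hc) in Hl'. lra.
  - intros a b c [H|[k [Hk Hl]]] [H'|[k' [Hk' Hl']]].
    + subst; left; auto.
    + subst; right; exists k'; auto.
    + subst; right; exists k; auto.
    + right. exists (Nat.min k k'). split.
      * intros j Hj. rewrite Hk, Hk'; auto; lia.
      * destruct (lt_eq_lt_dec k k') as [[Hc|Hc]|Hc].
        -- rewrite Nat.min_l by lia. rewrite <- (Hk' k Hc). auto.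
        -- subst. rewrite Nat.min_l by lia. lra.
        -- rewrite Nat.min_r by lia. rewrite (Hk k' Hc). auto.
Qed.

Lemma lex_P1 {G} (phi : G -> R -> R) u v :
  (forall y, phi u y < phi v y) -> lexle phi u v.
Proof. intro H. right. exists 0%nat. split; auto. intros; lia. Qed.

Lemma lex_total {G} mul e inv f phi (S : @Setup G mul e inv f phi) : total (lexle phi).
Proof.
  intros u v.
  destruct (classic (u = v)) as [|Hne]; [left; left; auto|].
  destruct S as (_ & _ & Hh & _ & Hinj & _).
  assert (Ex : exists k, phi u (qpt k) <> phi v (qpt k)).
  { apply NNPP. intro Hn. apply Hne. apply Hinj. intro y.
    apply NNPP. intro Hy.
    destruct (Hh u) as (Cu & _). destruct (Hh v) as (Cv & _).
    apply Hn. apply (cont_sep _ _ y); auto. }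
  destruct (nat_min _ Ex) as [k [Hk Hmin]].
  assert (Eq : forall j, (j < k)%nat -> phi u (qpt j) = phi v (qpt j)).
  { intros j Hj. apply NNPP. apply Hmin; auto. }
  destruct (Rlt_or_le (phi u (qpt k)) (phi v (qpt k))) as [Hl|Hl].
  - left. right. eauto.
  - right. right. exists k. split. { intros j Hj. symmetry; auto. } lra.
Qed.

Lemma lex_leftinv {G} mul e inv f phi (S : @Setup G mul e inv f phi) :
  left_invariant mul (lexle phi).
Proof.
  pose proof (phi_inc _ _ _ _ _ S) as Inc.
  destruct S as (_ & _ & _ & Hhom & _).
  intros k x y [H|[n [Hn Hl]]]; [subst; left; auto|].
  right. exists n. rewrite !(Hhom k). split.
  - intros j Hj. rewrite !Hhom, (Hn j Hj); auto.
  - apply Inc; auto.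
Qed.

Lemma ptle_po {G} (phi : G -> R -> R) : partial_order (ptle phi).
Proof.
  split; [|split].
  - intro; left; auto.
  - intros a b [H|H] [H'|H']; auto. specialize (H 0). specialize (H' 0). lra.
  - intros a b c [H|H] [H'|H'].
    + subst; left; auto.
    + subst; right; auto.
    + subst; right; auto.
    + right. intro y. specialize (H y). specialize (H' y). lra.
Qed.

Lemma ptle_leftinv {G} mul e inv f phi (S : @Setup G mul e inv f phi) :
  forall k x y, ptle phi x y -> ptle phi (mul k x) (mul k y).
Proof.
  pose proof (phi_inc _ _ _ _ _ S) as Inc.
  destruct S as (_ & _ & _ & Hhom & _).
  intros k x y [H|H]; [subst; left; auto|].
  right. intro z. rewrite !Hhom. apply Inc; auto.
Qed.

Lemma ptle_rightinv {G} mul e inv f phi (S : @Setup G mul e inv f phi) :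
  forall t x y, ptle phi x y -> ptle phi (mul x t) (mul y t).
Proof.
  destruct S as (_ & _ & _ & Hhom & _).
  intros t x y [H|H]; [subst; left; auto|].
  right. intro z. rewrite !Hhom. auto.
Qed.

Lemma ptle_lex {G} (phi : G -> R -> R) : refines (ptle phi) (lexle phi).
Proof. intros a b [H|H]. left; auto. apply lex_P1; auto. Qed.

Lemma iter_right {G} mul e inv f phi (S : @Setup G mul e inv f phi) t a :
  forall n y, phi (Nat.iter n (fun x => mul x t) a) y = phi a (Nat.iter n (phi t) y).
Proof.
  destruct S as (_ & _ & _ & Hhom & _).
  induction n as [|n IH]; intro y; simpl; auto.
  rewrite Hhom, IH. f_equal. rewrite <- Nat.iter_succ_r. reflexivity.
Qed.

Lemma iter_lower {G} mul e inv f phi (S : @Setup G mul e inv f phi) t :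
  forall n y, y + INR n * (f t - 1) <= Nat.iter n (phi t) y.
Proof.
  pose proof (disp _ _ _ _ _ S) as D.
  induction n as [|n IH]; intro y; simpl Nat.iter.
  - simpl. lra.
  - rewrite S_INR. pose proof (D t (Nat.iter n (phi t) y)). specialize (IH y). lra.
Qed.

Lemma right_dominates {G} mul e inv f phi (SS : @Setup G mul e inv f phi) t :
  f t > 2 -> forall a b, exists n : nat, (1 <= n)%nat /\
    forall y, phi b y < phi (Nat.iter n (fun x => mul x t) a) y.
Proof.
  intros Ht a b.
  pose proof (disp _ _ _ _ _ SS) as D.
  destruct (nat_big (f b - f a + 3)) as [n Hn].
  exists (S n). split; [lia|]. intro y.
  rewrite (iter_right _ _ _ _ _ SS).
  pose proof (iter_lower _ _ _ _ _ SS t (S n) y).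
  pose proof (D a (Nat.iter (S n) (phi t) y)). pose proof (D b y).
  rewrite S_INR in *. pose proof (pos_INR n).
  assert (INR n * (f t - 1) >= INR n) by nra. lra.
Qed.

Lemma big_elt {G} mul e inv f phi (SS : @Setup G mul e inv f phi) :
  forall h0, f h0 > 0 -> exists t, f t > 4 /\ exists m, t = npow mul e h0 m.
Proof.
  intros h0 H0.
  destruct (nat_big (4 / f h0)) as [m Hm].
  exists (npow mul e h0 m). split; eauto.
  rewrite (f_npow _ _ _ _ _ SS).
  apply (Rmult_lt_compat_r (f h0)) in Hm; auto. unfold Rdiv in Hm.
  rewrite Rmult_assoc, Rinv_l in Hm by lra. lra.
Qed.

Lemma central_npow {G} (mul : G -> G -> G) e (HG : forall x y z, mul x (mul y z) = mul (mul x y) z)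
  (Hl : forall x, mul e x = x) (Hr : forall x, mul x e = x) z :
  central mul z -> forall m, central mul (npow mul e z m).
Proof.
  intros Hz m. induction m as [|m IH]; intro g; unfold npow in *; simpl.
  - rewrite Hl, Hr; auto.
  - rewrite <- HG, IH, HG, Hz, HG. reflexivity.
Qed.

Theorem proposition4p6 (G : Type) (mul : G -> G -> G) (e : G) (inv : G -> G)
  (HG : is_group mul e inv) (f : G -> R) (Hf : circular mul e inv f) :
  (exists le : G -> G -> Prop,
      partial_order le /\ total le /\ left_invariant mul le /\
      growth_multiples_of mul e inv (induced_le mul le) f) /\
  (exists (le0 : G -> G -> Prop) (T : G -> G),
      quasi_total_triple le0 T /\ realizes mul e inv le0 T f /\
      exists le : G -> G -> Prop,
        partial_order le /\ total le /\ left_invariant mul le /\ refines le0 le) /\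
  ((forall M : R, exists z : G, central mul z /\ M < Rabs (f z)) ->
   exists (le : G -> G -> Prop) (T : G -> G),
     total_triple le T /\ realizes mul e inv le T f).
Proof.
  destruct Hf as ([_ Hq] & Hnz & phi & Hh & Hhom & Hinj & Htn).
  assert (SS : Setup mul e inv f phi) by exact (conj HG (conj Hq (conj Hh (conj Hhom (conj Hinj Htn))))).
  pose proof (disp _ _ _ _ _ SS) as D.
  pose proof (f_inv _ _ _ _ _ SS) as Fi.
  pose proof HG as (Has & Hl & Hr & Hli & Hri).
  assert (Grow : forall le, partial_order le ->
            (forall u v, (forall y, phi u y < phi v y) -> le u v) ->
            growth_multiples_of mul e inv (induced_le mul le) f).
  { intros le Hpo P1. apply (growth_generic _ _ _ _ _ SS); auto. }
  assert (Real : forall le t, partial_order le ->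
            (forall u v, (forall y, phi u y < phi v y) -> le u v) ->
            (forall g x y, le x y -> le (mul g x) (mul g y)) ->
            realizes mul e inv le (fun x => mul x t) f).
  { intros le t Hpo P1 Hli'. split; [auto|split; [|split; [|split]]].
    - intros g x. apply eq_sym, Has.
    - intros g Hg. rewrite <- (Hr g). apply Hg.
    - exists t, e, 1%nat. split; auto. simpl. rewrite Hl, Hr. apply Hpo.
    - apply Grow; auto. }
  split; [|split].
  - exists (lexle phi). split; [apply lex_po|split; [apply (lex_total _ _ _ _ _ SS)|split]].
    + apply (lex_leftinv _ _ _ _ _ SS).
    + apply Grow. apply lex_po. apply lex_P1.
  - assert (Ht : exists t, f t > 4).
    { destruct Hnz as [w Hw].
      assert (exists h0, f h0 > 0) as [h0 H0].
      { destruct (Rgt_or_ge (f w) 0). eauto. exists (inv w). rewrite Fi. lra. }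
      destruct (big_elt _ _ _ _ _ SS h0 H0) as [t [Ht _]]. eauto. }
    destruct Ht as [t Ht].
    exists (ptle phi), (fun x => mul x t). split; [|split].
    + split; [apply ptle_po|split].
      * split.
        -- split. apply (ptle_rightinv _ _ _ _ _ SS).
           exists (fun x => mul x (inv t)). split; intro x.
           ++ rewrite <- Has, Hri, Hr. auto.
           ++ rewrite <- Has, Hli, Hr. auto.
        -- intros a b. destruct (right_dominates _ _ _ _ _ SS t ltac:(lra) a b) as [n [Hn Hp]].
           exists n. split; auto. split. right; auto.
           intro Heq. specialize (Hp 0). rewrite <- Heq in Hp. lra.
      * exists 1%nat. split; auto. intros a b. exists 1%nat. split; auto. simpl.
        destruct (Rle_or_lt (f b) (f a)).
        -- right. right. intro y. rewrite Hhom.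
           pose proof (D a (phi t y)). pose proof (D t y). pose proof (D b y). lra.
        -- left. right. intro y. rewrite Hhom.
           pose proof (D b (phi t y)). pose proof (D t y). pose proof (D a y). lra.
    + apply Real. apply ptle_po. intros u v H; right; auto. apply (ptle_leftinv _ _ _ _ _ SS).
    + exists (lexle phi). split; [apply lex_po|split; [apply (lex_total _ _ _ _ _ SS)|split]].
      * apply (lex_leftinv _ _ _ _ _ SS).
      * apply ptle_lex.
  - intros Hc.
    assert (Ht : exists t, central mul t /\ f t > 4).
    { destruct (Hc 4) as [z [Hz Hfz]].
      destruct (Rgt_or_ge (f z) 0).
      - exists z. rewrite Rabs_right in Hfz by lra. split; auto.
      - exists (inv z). rewrite Rabs_left1 in Hfz by lra. rewrite Fi. split; [|lra].
        intro g. 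
        assert (E1 : mul z (mul (inv z) g) = mul z (mul g (inv z))).
        { transitivity g.
          - rewrite (Has z (inv z) g), Hri, Hl. auto.
          - rewrite (Has z g (inv z)), Hz, <- (Has g z (inv z)), Hri, Hr. auto. }
        assert (E2 : forall a b, mul z a = mul z b -> a = b).
        { intros a b Hab. rewrite <- (Hl a), <- (Hl b), <- (Hli z), <- (Has (inv z) z a), <- (Has (inv z) z b), Hab. auto. }
        auto. }
    destruct Ht as [t [Hct Ht]].
    exists (lexle phi), (fun x => mul x t). split.
    + split; [|apply (lex_total _ _ _ _ _ SS)].
      split; [apply lex_po|split].
      * split.
        -- split.
           ++ intros a b Hab. rewrite <- !Hct. apply (lex_leftinv _ _ _ _ _ SS); auto.
           ++ exists (fun x => mul x (inv t)). split; intro x.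
              ** rewrite <- Has, Hri, Hr. auto.
              ** rewrite <- Has, Hli, Hr. auto.
        -- intros a b. destruct (right_dominates _ _ _ _ _ SS t ltac:(lra) a b) as [n [Hn Hp]].
           exists n. split; auto. split. apply lex_P1; auto.
           intro Heq. specialize (Hp 0). rewrite <- Heq in Hp. lra.
      * exists 1%nat. split; auto. intros a b. exists 0%nat. split; auto. simpl.
        apply (lex_total _ _ _ _ _ SS).
    + apply Real. apply lex_po. apply lex_P1. apply (lex_leftinv _ _ _ _ _ SS).
Qed.
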